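(* Fix real numbers $\mu_D$, $\sigma_D>0$, $\mu_L>0$, $\sigma_L>0$, an odd integer $n\ge1$ and an integer $m\ge1$, and let $B(\rho)$ be the function defined in the context. Then $B(0)\le\lim_{\rho\to-1^+}B(\rho)$ if and only if $$m\ge\frac{\sigma_L\sqrt{\sigma_L^2+4n\mu_L(\mu_L+n)}-\sigma_L^2}{2\mu_L(\mu_L+n)}.$$ Moreover, if $n\ge3$ is odd and this inequality holds, then $B$ has at least one stationary point (a point where $B'=0$) in the interval $(-1,0)$.
   Context: For fixed real parameters $\mu_D$, $\sigma_D>0$, $\mu_L\ge0$, $\sigma_L\ge0$ and integers $n,m\ge1$, define for $\rho\in(-1,1)$ $$B(\rho)=\frac{2\sigma_L^2}{n^2m^2}\left(m(1-\rho^n)+\frac{n(1+\rho)}{1-\rho}-\frac{(1+\rho^2)(1-\rho^n)}{(1-\rho)^2}\right)+\frac{2\sigma_L^2\mu_D^2}{\sigma_D^2 m^2}+\left(\frac{2\mu_L^2}{n^2}+\frac{2\mu_L}{n}\right)(1-\rho^n)+1 .$$ (This is the bullwhip measure $\operatorname{Var}q_t/\operatorname{Var}D_t$ for AR(1) demand with autocorrelation $\rho$, mean $\mu_D$ and variance $\sigma_D^2$, i.i.d. lead times with mean $\mu_L$ and variance $\sigma_L^2$, moving-average demand forecast over $n$ periods and moving-average lead-time forecast over $m$ periods, under the order-up-to policy.) Note $B(0)$ is the bullwhip measure for i.i.d. demand. *)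

(* Defs.v *)
From Stdlib Require Import Reals Lra Lia Arith.
Open Scope R_scope.

Definition bullwhip (muD sigD muL sigL : R) (n m : nat) (rho : R) : R :=
  let nR := INR n in
  let mR := INR m in
  2 * sigL ^ 2 / (nR ^ 2 * mR ^ 2) *
    (mR * (1 - rho ^ n) + nR * (1 + rho) / (1 - rho)
     - (1 + rho ^ 2) * (1 - rho ^ n) / (1 - rho) ^ 2)
  + 2 * sigL ^ 2 * muD ^ 2 / (sigD ^ 2 * mR ^ 2)
  + (2 * muL ^ 2 / nR ^ 2 + 2 * muL / nR) * (1 - rho ^ n)
  + 1.

(* Domain of rho: the open interval (-1,1). A limit at -1 restricted to this
   domain is the one-sided limit rho -> -1^+. *)
Definition rho_dom (rho : R) : Prop := -1 < rho < 1.

(* Main.v *)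
Require Import Defs.
From Stdlib Require Import Reals Lra Lia Arith.
From Coquelicot Require Import Coquelicot.
Open Scope R_scope.

Lemma dB muD sigD muL sigL n m x : x <> 1 -> derivable_pt_lim (bullwhip muD sigD muL sigL n m) x
  (Derive (bullwhip muD sigD muL sigL n m) x).
Proof. intros. apply is_derive_Reals. apply Derive_correct. unfold bullwhip. auto_derive.
  split; [lra|]. split; [|auto]. apply Rmult_integral_contrapositive; split; [lra|]. lra.
Qed.

Lemma d0 muD sigD muL sigL n m : (3<=n)%nat -> (1<=m)%nat -> derivable_pt_lim (bullwhip muD sigD muL sigL n m) 0
  (2 * sigL^2 / (INR n ^2 * INR m^2) * (2 * INR n - 2)).
Proof. intros. apply is_derive_Reals. unfold bullwhip. auto_derive.
  split; [lra|]. split; [|auto]. lra.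
  rewrite !pow_i by lia.
  assert (INR n <> 0) by (apply not_0_INR; lia).
  assert (INR m <> 0) by (apply not_0_INR; lia).
  field. auto.
Qed.

Lemma cont muD sigD muL sigL n m x : x <> 1 -> continuity_pt (bullwhip muD sigD muL sigL n m) x.
Proof. intro H. apply derivable_continuous_pt. exists (Derive (bullwhip muD sigD muL sigL n m) x).
  apply dB; auto. Qed.

Lemma B0 muD sigD muL sigL n m : (1<=n)%nat -> (1<=m)%nat -> 0 < sigD -> bullwhip muD sigD muL sigL n m 0 =
  2 * sigL ^ 2 / (INR n ^ 2 * INR m ^ 2) * (INR m + INR n - 1)
  + 2 * sigL ^ 2 * muD ^ 2 / (sigD ^ 2 * INR m ^ 2)
  + (2 * muL ^ 2 / INR n ^ 2 + 2 * muL / INR n) + 1.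
Proof. intros. intros; unfold bullwhip. rewrite pow_i by lia.
  assert (INR n <> 0) by (apply not_0_INR; lia).
  assert (INR m <> 0) by (apply not_0_INR; lia).
  replace (1-0) with 1 by ring. rewrite pow1. field. repeat split; auto; lra. Qed.

Lemma Bm1 muD sigD muL sigL n m : Nat.Odd n -> (1<=m)%nat -> 0 < sigD -> bullwhip muD sigD muL sigL n m (-1) =
  2 * sigL ^ 2 / (INR n ^ 2 * INR m ^ 2) * (2 * INR m - 1)
  + 2 * sigL ^ 2 * muD ^ 2 / (sigD ^ 2 * INR m ^ 2)
  + (2 * muL ^ 2 / INR n ^ 2 + 2 * muL / INR n) * 2 + 1.
Proof. intros [k Hk] Hm Hs. subst n. unfold bullwhip.
  replace (2*k+1)%nat with (S (2*k)) by lia. rewrite pow_1_odd.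
  assert (INR (S (2*k)) <> 0) by (apply not_0_INR; lia).
  assert (INR m <> 0) by (apply not_0_INR; lia).
  replace (1 - -1) with 2 by ring. field. repeat split; auto; lra. Qed.

Lemma quad (a sg nn mm : R) : 0 < a -> 0 < sg -> 0 < nn -> 0 < mm ->
  (0 <= a * mm^2 + sg^2 * mm - sg^2 * nn <->
   mm >= (sg * sqrt (sg^2 + 4 * nn * a) - sg^2) / (2 * a)).
Proof.
  intros Ha Hs Hn Hm.
  set (s := sqrt (sg^2 + 4 * nn * a)).
  assert (Hs0 : 0 <= s) by apply sqrt_pos.
  assert (Hs2 : s * s = sg^2 + 4*nn*a) by (apply sqrt_sqrt; nra).
  assert (E : a * mm^2 + sg^2 * mm - sg^2 * nn =
     a * (mm - (sg * s - sg^2) / (2 * a)) * (mm - (- sg * s - sg^2) / (2*a))).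
  { field_simplify; [|lra]. replace (s^2) with (s*s) by ring. rewrite Hs2. field. lra. }
  assert (Hr' : (- sg * s - sg^2) / (2*a) < 0).
  { unfold Rdiv. apply Rmult_neg_pos. nra. apply Rinv_0_lt_compat; lra. }
  rewrite E. split; intro H.
  - destruct (Rle_or_lt ((sg * s - sg^2) / (2 * a)) mm); [lra|].
    exfalso. assert (0 < a * ((sg * s - sg ^ 2) / (2 * a) - mm)) by (apply Rmult_lt_0_compat; lra).
    nra.
  - assert (0 <= a * (mm - (sg * s - sg ^ 2) / (2 * a))) by (apply Rmult_le_pos; lra).
    nra.
Qed.

Theorem mainTheorem11 (muD sigD muL sigL : R) (n m : nat) :
  0 < sigD -> 0 < muL -> 0 < sigL ->
  Nat.Odd n -> (1 <= n)%nat -> (1 <= m)%nat ->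
  (exists L : R,
     limit1_in (bullwhip muD sigD muL sigL n m) rho_dom L (-1) /\
     (bullwhip muD sigD muL sigL n m 0 <= L <->
      INR m >= (sigL * sqrt (sigL ^ 2 + 4 * INR n * muL * (muL + INR n)) - sigL ^ 2)
               / (2 * muL * (muL + INR n))))
  /\
  ((3 <= n)%nat ->
   INR m >= (sigL * sqrt (sigL ^ 2 + 4 * INR n * muL * (muL + INR n)) - sigL ^ 2)
            / (2 * muL * (muL + INR n)) ->
   exists rho : R, -1 < rho < 0 /\
     derivable_pt_lim (bullwhip muD sigD muL sigL n m) rho 0).
Proof.
  intros HsD HmL HsL Hodd Hn Hm.
  set (B := bullwhip muD sigD muL sigL n m).
  assert (Hn0 : 0 < INR n) by (apply lt_0_INR; lia).
  assert (Hm0 : 0 < INR m) by (apply lt_0_INR; lia).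
  assert (Key : B 0 <= B (-1) <->
      INR m >= (sigL * sqrt (sigL ^ 2 + 4 * INR n * muL * (muL + INR n)) - sigL ^ 2)
               / (2 * muL * (muL + INR n))).
  { replace (4 * INR n * muL * (muL + INR n)) with (4 * INR n * (muL * (muL + INR n))) by ring.
    replace (2 * muL * (muL + INR n)) with (2 * (muL * (muL + INR n))) by ring.
    rewrite <- quad by (try apply Rmult_lt_0_compat; lra).
    unfold B. rewrite B0, Bm1 by auto.
    assert (Ed : 2 * sigL ^ 2 / (INR n ^ 2 * INR m ^ 2) * (2 * INR m - 1) +
      2 * sigL ^ 2 * muD ^ 2 / (sigD ^ 2 * INR m ^ 2) +
      (2 * muL ^ 2 / INR n ^ 2 + 2 * muL / INR n) * 2 + 1
      - (2 * sigL ^ 2 / (INR n ^ 2 * INR m ^ 2) * (INR m + INR n - 1) +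
      2 * sigL ^ 2 * muD ^ 2 / (sigD ^ 2 * INR m ^ 2) +
      (2 * muL ^ 2 / INR n ^ 2 + 2 * muL / INR n) + 1)
      = 2 / (INR n ^ 2 * INR m ^ 2) *
        (muL * (muL + INR n) * INR m ^ 2 + sigL ^ 2 * INR m - sigL ^ 2 * INR n)).
    { field. lra. }
    assert (Hp : 0 < 2 / (INR n ^ 2 * INR m ^ 2)).
    { unfold Rdiv. apply Rmult_lt_0_compat; [lra|]. apply Rinv_0_lt_compat.
      apply Rmult_lt_0_compat; apply pow_lt; lra. }
    split; intro H.
    - apply (Rmult_le_reg_l (2 / (INR n ^ 2 * INR m ^ 2))); [lra|]. rewrite <- Ed. lra.
    - assert (0 <= 2 / (INR n ^ 2 * INR m ^ 2) *
        (muL * (muL + INR n) * INR m ^ 2 + sigL ^ 2 * INR m - sigL ^ 2 * INR n))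
        by (apply Rmult_le_pos; lra). lra. }
  split.
  - exists (B (-1)). split; [|exact Key].
    intros eps Heps.
    destruct (cont muD sigD muL sigL n m (-1) ltac:(lra) eps Heps) as [alp [Ha Hc]].
    exists alp. split; auto. intros x [Hx Hd]. apply Hc. split; auto.
    unfold D_x, no_cond, rho_dom in *. split; [exact I|]. simpl in *. lra.
  - intros Hn3 Hcond. apply Key in Hcond.
    set (l := 2 * sigL^2 / (INR n ^2 * INR m^2) * (2 * INR n - 2)).
    assert (Hl : 0 < l).
    { unfold l. apply Rmult_lt_0_compat.
      unfold Rdiv. apply Rmult_lt_0_compat; [nra|]. apply Rinv_0_lt_compat.
      apply Rmult_lt_0_compat; apply pow_lt; lra.
      assert (3 <= INR n) by (replace 3 with (INR 3) by (simpl; ring); apply le_INR; lia). lra. }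
    destruct (d0 muD sigD muL sigL n m Hn3 Hm (l/2) ltac:(lra)) as [del Hdel].
    set (h := - Rmin (del/2) (1/2)).
    assert (Hdp := cond_pos del).
    assert (Hh1 : - (1/2) <= h < 0).
    { unfold h. split. apply Ropp_le_contravar, Rmin_r.
      apply Ropp_lt_gt_0_contravar. apply Rmin_glb_lt; lra. }
    assert (Hh2 : Rabs h < del).
    { rewrite Rabs_left by lra. unfold h. rewrite Ropp_involutive.
      apply Rle_lt_trans with (del/2). apply Rmin_l. lra. }
    specialize (Hdel h ltac:(lra) Hh2). fold B in Hdel.
    rewrite Rplus_0_l in Hdel. fold l in Hdel.
    apply Rabs_lt_between in Hdel.
    set (q := (B h - B 0) / h) in Hdel.
    assert (Hq : B h - B 0 = q * h) by (unfold q; field; lra).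
    assert (HBh : B h < B 0) by nra.
    assert (Hz : exists z, -1 <= z <= h /\ B z = B 0).
    { destruct (Req_dec (B (-1)) (B 0)) as [Heq|Hne].
      - exists (-1). split; [lra|auto].
      - destruct (Ranalysis5.IVT_interv (fun t => B 0 - B t) (-1) h) as [z [Hz1 Hz2]].
        + intros a Ha. apply continuity_pt_minus.
          apply continuity_pt_const. intros ? ?; reflexivity.
          apply cont. lra.
        + lra.
        + lra.
        + lra.
        + exists z. split; [auto|lra]. }
    destruct Hz as [z [Hz1 Hz2]].
    destruct (MVT_cor2 B (Derive B) z 0 ltac:(lra)) as [c [Hc1 Hc2]].
    { intros c Hc. apply dB. lra. }
    exists c. split; [lra|].
    assert (Derive B c = 0).
    { rewrite Hz2 in Hc1. assert (Derive B c * (0 - z) = 0) by lra.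
      apply Rmult_integral in H. destruct H; [auto|lra]. }
    rewrite <- H. apply dB. lra.
Qed.
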